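(* Let $G$ be a group with nontrivial center $Z(G)\neq\{1\}$. Then for every subgroup $A\subseteq\operatorname{Aut}(G)$, the $\mathcal{L}(A)$-group $G$ is not an $\mathcal{L}(A)$-equational domain.
   Context: For a subgroup $A\subseteq\operatorname{Aut}(G)$, $\mathcal{L}(A)=\{\cdot,{}^{-1},1\}\cup\{\phi\mid\phi\in A\}$ is the group language with a unary function symbol for each $\phi\in A$, interpreted as $\phi$. $\mathcal{L}(A)$-equations are $t(X)=1$ with $t$ an $\mathcal{L}(A)$-term (equivalently a product $\phi_1(x_{i_1}^{\varepsilon_1})\cdots\phi_k(x_{i_k}^{\varepsilon_k})$, $\phi_j\in A$, $\varepsilon_j=\pm1$); systems are arbitrary sets of equations and $V_G(S)$ is the solution set. A subset of $G^n$ is $\mathcal{L}(A)$-algebraic if it is $V_G(S)$ for some $\mathcal{L}(A)$-system $S$ in $n$ variables. $G$ is an $\mathcal{L}(A)$-equational domain if for every $n$ the union of any two $\mathcal{L}(A)$-algebraic subsets of $G^n$ is $\mathcal{L}(A)$-algebraic. *)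

(* Defs.v *)
From mathcomp Require Import all_boot.
Set Implicit Arguments. Unset Strict Implicit. Unset Printing Implicit Defensive.

Record group := Group {
  gcar :> Type;
  gmul : gcar -> gcar -> gcar;
  ginv : gcar -> gcar;
  gone : gcar;
  gmulA : forall x y z, gmul x (gmul y z) = gmul (gmul x y) z;
  gmul1l : forall x, gmul gone x = x;
  gmul1r : forall x, gmul x gone = x;
  gmulVl : forall x, gmul (ginv x) x = gone;
  gmulVr : forall x, gmul x (ginv x) = gone
}.

Definition nontrivial_center (G : group) : Prop :=
  exists z : G, z <> gone G /\ forall g : G, gmul z g = gmul g z.

Definition is_automorphism (G : group) (f : G -> G) : Prop :=
  (forall x y : G, f (gmul x y) = gmul (f x) (f y)) /\
  (forall x y : G, f x = f y -> x = y) /\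
  (forall y : G, exists x : G, f x = y).

Definition aut_subgroup (G : group) (A : (G -> G) -> Prop) : Prop :=
  (forall f, A f -> is_automorphism f) /\
  A (fun x => x) /\
  (forall f g, A f -> A g -> A (fun x => f (g x))) /\
  (forall f, A f -> exists g, A g /\ (forall x, g (f x) = x) /\ (forall x, f (g x) = x)).

(* Terms in the language {., ^-1, 1} u {phi : phi unary function symbol},
   in the variables x_0, ..., x_{n-1}. *)
Inductive term (G : Type) (n : nat) : Type :=
| TVar : 'I_n -> term G n
| TOne : term G n
| TMul : term G n -> term G n -> term G n
| TInv : term G n -> term G n
| TApp : (G -> G) -> term G n -> term G n.

Fixpoint LA_term (G : Type) (n : nat) (A : (G -> G) -> Prop) (t : term G n) : Prop :=
  match t with
  | TVar _ => True
  | TOne => True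
  | TMul t1 t2 => LA_term A t1 /\ LA_term A t2
  | TInv t1 => LA_term A t1
  | TApp f t1 => A f /\ LA_term A t1
  end.

Fixpoint eval (G : group) (n : nat) (x : 'I_n -> G) (t : term G n) : G :=
  match t with
  | TVar i => x i
  | TOne => gone G
  | TMul t1 t2 => gmul (eval x t1) (eval x t2)
  | TInv t1 => ginv (eval x t1)
  | TApp f t1 => f (eval x t1)
  end.

(* A system is an arbitrary set of equations t = 1, represented by the set of terms t. *)
Definition LA_system (G : Type) (n : nat) (A : (G -> G) -> Prop)
  (S : term G n -> Prop) : Prop := forall t, S t -> LA_term A t.

Definition solutions (G : group) (n : nat) (S : term G n -> Prop) (x : 'I_n -> G) : Prop :=
  forall t, S t -> eval x t = gone G.

Definition LA_algebraic (G : group) (n : nat) (A : (G -> G) -> Prop)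
  (P : ('I_n -> G) -> Prop) : Prop :=
  exists S, LA_system A S /\ forall x, P x <-> solutions S x.

Definition LA_equational_domain (G : group) (A : (G -> G) -> Prop) : Prop :=
  forall (n : nat) (P Q : ('I_n -> G) -> Prop),
    LA_algebraic A P -> LA_algebraic A Q ->
    LA_algebraic A (fun x => P x \/ Q x).
Arguments LA_equational_domain : clear implicits.

(* Main.v *)
Require Import Defs.
From mathcomp Require Import all_boot.

Section Aux.
Variable G : group.
Local Notation "x * y" := (gmul x y).
Local Notation "x ^-1" := (ginv x).
Local Notation one := (gone G).

Definition central (c : G) := forall g : G, c * g = g * c.

Lemma inv_unique (u v : G) : u * v = one -> u^-1 = v.
Proof.
move=> H. rewrite -(gmul1r u^-1) -H gmulA gmulVl gmul1l //.
Qed.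

Lemma invM (a b : G) : (a * b)^-1 = b^-1 * a^-1.
Proof.
apply: inv_unique.
by rewrite -gmulA (gmulA b) gmulVr gmul1l gmulVr.
Qed.

Lemma centralM a b : central a -> central b -> central (a * b).
Proof. move=> Ha Hb g. by rewrite -gmulA Hb gmulA Ha gmulA. Qed.

Lemma centralV a : central a -> central a^-1.
Proof.
move=> Ha g.
have E : a^-1 * g = a^-1 * (g * a) * a^-1.
  by rewrite -!gmulA gmulVr gmul1r.
by rewrite E -Ha !gmulA gmulVl gmul1l.
Qed.

Lemma centralF f a : is_automorphism f -> central a -> central (f a).
Proof.
move=> [Hm [_ Hs]] Ha g. have [h <-] := Hs g. by rewrite -!Hm Ha.
Qed.

Lemma eval_mul n (A : (G -> G) -> Prop) (x y : 'I_n -> G)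
  (hA : forall f, A f -> is_automorphism f) (t : term G n) :
  (forall i, central (x i)) -> (forall i, central (y i)) -> LA_term A t ->
  eval (fun i => x i * y i) t = eval x t * eval y t /\
  central (eval x t) /\ central (eval y t).
Proof.
move=> Hx Hy; elim: t => [i | | t1 IH1 t2 IH2 | t1 IH1 | f t1 IH1] /= Ht.
- by [].
- split; first by rewrite gmul1l.
  by split => g; rewrite gmul1l gmul1r.
- case: Ht => H1 H2.
  have [E1 [C1 D1]] := IH1 H1; have [E2 [C2 D2]] := IH2 H2.
  split; last by split; apply: centralM.
  rewrite E1 E2 -!gmulA; congr (gmul _ _).
  by rewrite !gmulA D1.
- have [E1 [C1 D1]] := IH1 Ht.
  split; last by split; apply: centralV.
  by rewrite E1 invM centralV.
- case: Ht => Hf H1.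
  have [E1 [C1 D1]] := IH1 H1.
  split; last by split; apply: centralF => //; apply: hA.
  by rewrite E1; case: (hA f Hf).
Qed.
End Aux.

Theorem corollary1 (G : group) (hZ : nontrivial_center G)
  (A : (G -> G) -> Prop) (hA : aut_subgroup A) :
  ~ LA_equational_domain G A.
Proof.
move=> HD.
case: hZ => z [nz Hz].
have alg : forall i : 'I_2, LA_algebraic A (fun x : 'I_2 -> G => x i = gone G).
  move=> i. exists (fun t => t = TVar G i). split.
    by move=> t ->.
  move=> x; split.
    by move=> Hx t ->.
  by move=> H; apply: (H (TVar G i)).
have [S [HS HP]] := HD 2 _ _ (alg ord0) (alg (@Ordinal 2 1 isT)).
pose x : 'I_2 -> G := fun i => if val i == 0 then z else gone G.
pose y : 'I_2 -> G := fun i => if val i == 0 then gone G else z.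
have cone : central G (gone G) by move=> g; rewrite gmul1l gmul1r.
have Cx : forall i, central G (x i) by move=> i; rewrite /x; case: ifP.
have Cy : forall i, central G (y i) by move=> i; rewrite /y; case: ifP.
have Sx : solutions S x by apply/HP; right.
have Sy : solutions S y by apply/HP; left.
have : solutions S (fun i => gmul (x i) (y i)).
  move=> t St.
  have [E _] := @eval_mul G 2 A x y (proj1 hA) t Cx Cy (HS t St).
  by rewrite E Sx // Sy // gmul1l.
move/HP => [] /=; rewrite /x /y /=; rewrite ?gmul1r ?gmul1l; exact: nz.
Qed.
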